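(* Let $\mathcal A=\{A_s\}_{s\in\mathbf S}\subset CQ(\mathbf X,\mathcal H)$ be an AVcqC with $\mathbf S$ finite, $l\in\mathbb N$, $\mu_l$ an $(l,M_l)$-random code for $\mathcal A$ and $0\le\varepsilon_l<1$ with $$\inf_{s^l\in\mathbf S^l}\int\frac1{M_l}\sum_{i=1}^{M_l}\mathrm{tr}(A_{s^l}(x_i^l)D_i^l)\,d\mu_l\big((x_i^l,D_i^l)_{i=1}^{M_l}\big)\ge1-\varepsilon_l.$$ Let $n,m\in\mathbb R$ be such that $l^n\in\mathbb N$. If $4\varepsilon_l\le l^{-m}$ and $2\log|\mathbf S|<l^{n-m-1}$, then there exist $l^n$ deterministic $(l,M_l)$-codes $(x_{i,j}^l,D_{i,j}^l)_{i=1}^{M_l}$, $1\le j\le l^n$, such that $$\frac1{l^n}\sum_{j=1}^{l^n}\frac1{M_l}\sum_{i=1}^{M_l}\mathrm{tr}(A_{s^l}(x_{i,j}^l)D_{i,j}^l)\ge1-l^{-m}\quad\text{for all }s^l\in\mathbf S^l.$$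
   Context: $\mathbf X$ finite, $\mathcal H$ finite-dimensional complex Hilbert space, $CQ(\mathbf X,\mathcal H)$ the maps $\mathbf X\to\mathcal S(\mathcal H)$; $A_{s^l}(x^l)=\bigotimes_iA_{s_i}(x_i)$. An $(l,M)$ deterministic code is $(x_i^l,D_i^l)_{i=1}^M$ with $x_i^l\in\mathbf X^l$, $D_i^l\ge0$ on $\mathcal H^{\otimes l}$, $\sum_iD_i^l\le\mathbf 1$; an $(l,M)$-random code is a probability measure on the set of such tuples (with a sigma-algebra making the success functions measurable). Logs base 2. *)

(* Defs.v *)
From HB Require Import structures.
From mathcomp Require Import all_boot all_order all_algebra.
From mathcomp Require Import complex mxtens.
From mathcomp Require Import all_classical all_reals all_analysis.

Set Implicit Arguments.
Unset Strict Implicit.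
Unset Printing Implicit Defensive.

Import Order.TTheory GRing.Theory Num.Theory.
Local Open Scope ring_scope.

(* The Hilbert space H is C^d, C = R[i]; H^{(x)l} is C^(dpow d l), dpow d l = d^l. *)
Fixpoint dpow (d l : nat) : nat :=
  match l with 0 => 1%N | l'.+1 => (d * dpow d l')%N end.

Section QDefs.
Variable R : realType.
Local Notation C := (R[i]).

(* positive semidefinite: <v, A v> >= 0 for every vector v (order of C:
   0 <= z iff z is real and nonnegative) *)
Definition psd (n : nat) (A : 'M[C]_n) : Prop :=
  forall v : 'cV[C]_n, 0 <= ((\row_j (v j 0)^* ) *m A *m v) 0 0.

Definition density (n : nat) (A : 'M[C]_n) : Prop := psd A /\ \tr A = 1.

Fixpoint ktens (d l : nat) : ('I_l -> 'M[C]_d) -> 'M[C]_(dpow d l) :=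
  match l return ('I_l -> 'M[C]_d) -> 'M[C]_(dpow d l) with
  | 0 => fun _ => 1%:M
  | l'.+1 => fun f => tensmx (f ord0) (ktens (fun i : 'I_l' => f (lift ord0 i)))
  end.

Definition cq_channel (X : finType) (d : nat) (W : X -> 'M[C]_d) : Prop :=
  forall x, density (W x).

Definition Atens (S X : finType) (d l : nat) (A : S -> X -> 'M[C]_d)
  (s : {ffun 'I_l -> S}) (x : {ffun 'I_l -> X}) : 'M[C]_(dpow d l) :=
  ktens (fun i => A (s i) (x i)).

Record dcode (X : finType) (d l M : nat) := Code {
  cword : 'I_M -> {ffun 'I_l -> X};
  cdec  : 'I_M -> 'M[C]_(dpow d l) }.

Definition is_code (X : finType) (d l M : nat) (c : dcode X d l M) : Prop :=
  (forall i, psd (cdec c i)) /\ psd (1%:M - \sum_i cdec c i).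

Definition success (S X : finType) (d l M : nat) (A : S -> X -> 'M[C]_d)
  (s : {ffun 'I_l -> S}) (c : dcode X d l M) : R :=
  (M%:R)^-1 * \sum_(i < M) @complex.Re R (\tr (Atens A s (cword c i) *m cdec c i)).

Definition log2 (x : R) : R := ln x / ln 2.

End QDefs.

(* Main.v *)
Require Import Defs.
From HB Require Import structures.
From mathcomp Require Import all_boot all_order all_algebra.
From mathcomp Require Import complex mxtens.
From mathcomp Require Import all_classical all_reals all_analysis.
From mathcomp Require Import measurable_realfun.
From mathcomp Require Import ring lra.
Import Order.TTheory GRing.Theory Num.Theory.
Local Open Scope ring_scope.
Set Implicit Arguments.
Unset Strict Implicit.
Unset Printing Implicit Defensive.
Lemma alg1 (F : fieldType) (i a b A B' : F) : i != 0 ->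
  - i * A - - i * B' = i * a - i * b -> B' - A = a - b.
Proof.
move=> i0 e; apply: (mulfI i0); transitivity (- i * A - - i * B'); first ring.
by rewrite e; ring.
Qed.
Lemma alg2 (F : numFieldType) (a b A B' : F) :
  A + B' = a + b -> B' - A = a - b -> b = A.
Proof.
move=> e1 e2; have : 2%:R * b = 2%:R * A.
  transitivity ((a + b) - (a - b)); first ring.
  by rewrite -e1 -e2; ring.
have h2 : (2%:R : F) != 0 by rewrite pnatr_eq0.
by move/(mulfI h2).
Qed.

Section Mx.
Variable R : realType.
Local Notation C := (R[i]).

Definition adj n (v : 'cV[C]_n) : 'rV[C]_n := \row_j (v j 0)^*.
Definition form n (B : 'M[C]_n) (x y : 'cV[C]_n) : C := (adj x *m B *m y) 0 0.

Lemma psd_form n (B : 'M[C]_n) : psd B <-> forall v, 0 <= form B v v.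
Proof. by []. Qed.

Lemma adjD n (x y : 'cV[C]_n) : adj (x + y) = adj x + adj y.
Proof. by apply/matrixP=> i j; rewrite !mxE rmorphD. Qed.
Lemma adjZ n (c : C) (x : 'cV[C]_n) : adj (c *: x) = c^* *: adj x.
Proof. by apply/matrixP=> i j; rewrite !mxE rmorphM. Qed.

Lemma formDl n (B : 'M[C]_n) x y z : form B (x + y) z = form B x z + form B y z.
Proof. by rewrite /form adjD !mulmxDl mxE. Qed.
Lemma formDr n (B : 'M[C]_n) x y z : form B z (x + y) = form B z x + form B z y.
Proof. by rewrite /form !mulmxDr mxE. Qed.
Lemma formZl n (B : 'M[C]_n) c x y : form B (c *: x) y = c^* * form B x y.
Proof. by rewrite /form adjZ -!scalemxAl mxE. Qed.
Lemma formZr n (B : 'M[C]_n) c x y : form B x (c *: y) = c * form B x y.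
Proof. by rewrite /form -!scalemxAr mxE. Qed.
Lemma formE n (B : 'M[C]_n) x y :
  form B x y = \sum_a \sum_b (x a 0)^* * B a b * y b 0.
Proof.
rewrite /form mxE exchange_big; apply: eq_bigr => b _; rewrite mxE mulr_suml.
by apply: eq_bigr => a _; rewrite !mxE.
Qed.
Lemma form_delta n (B : 'M[C]_n) i j :
  form B (delta_mx i 0) (delta_mx j 0) = B i j.
Proof.
rewrite formE (bigD1 i) //= [X in _ + X]big1; last first.
  move=> a /negbTE ai; apply: big1 => b _; rewrite mxE ai /= rmorph0 !mul0r //.
rewrite addr0 (bigD1 j) //= [X in _ + X]big1; last first.
  by move=> b /negbTE bj; rewrite [delta_mx j 0 b 0]mxE bj /= mulr0.
by rewrite !mxE !eqxx /= rmorph1 mul1r mulr1 addr0.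
Qed.
Lemma psd_real n (B : 'M[C]_n) v : psd B -> form B v v \is Num.real.
Proof. by move=> h; apply: ger0_real; apply: h. Qed.

Lemma form_herm n (B : 'M[C]_n) x y : psd B -> form B y x = (form B x y)^*.
Proof.
move=> hB; set a := form B x y; set b := form B y x.
have r1 : a + b \is Num.real.
  have -> : a + b = form B (x + y) (x + y) - form B x x - form B y y.
    by rewrite formDl !formDr -/a -/b; ring.
  by rewrite !rpredB // psd_real.
have r2 : 'i * a - 'i * b \is Num.real.
  have -> : 'i * a - 'i * b = form B (x + 'i *: y) (x + 'i *: y) - form B x x - form B y y.
    rewrite formDl !formDr !formZl !formZr -/a -/b conjCi; have := @sqrCi C.
    rewrite expr2 => e; rewrite !mulNr (mulrA 'i 'i) e; ring.
  by rewrite !rpredB // psd_real.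
move: r1 r2; rewrite !CrealE. rewrite rmorphB !rmorphD !rmorphM /= conjCi => /eqP e1 /eqP e2.
have e3 := alg1 (neq0Ci C) e2.
exact: alg2 e1 e3.
Qed.
Lemma psd_herm n (B : 'M[C]_n) i j : psd B -> B j i = (B i j)^*.
Proof. by move=> h; rewrite -!form_delta form_herm. Qed.

Lemma psd_diag_ge0 n (B : 'M[C]_n) i : psd B -> 0 <= B i i.
Proof. by move=> h; rewrite -form_delta; apply: h. Qed.

Lemma real_conj (z : C) : z \is Num.real -> z^* = z.
Proof. by rewrite CrealE => /eqP. Qed.

Lemma psd_diag0 n (B : 'M[C]_n) j k : psd B -> B j j = 0 -> B k j = 0.
Proof.
move=> hB hjj; set x : 'cV[C]_n := delta_mx k 0; set e : 'cV[C]_n := delta_mx j 0.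
have hc : form B x e = B k j by rewrite form_delta.
apply/eqP; apply: contraT => c0; rewrite -hc in c0.
set c := form B x e in c0 hc *; set p := form B x x.
have p0 : 0 <= p by apply: hB.
have pr : p^* = p by apply: real_conj; apply: ger0_real.
set z := - (p + 1) / c.
have zc : z * c = - (p + 1) by rewrite /z mulrVK ?unitfE.
have : 0 <= form B (x + z *: e) (x + z *: e) := hB _.
rewrite formDl !formDr !formZl !formZr -/p -/c (form_herm _ _ hB) -/c.
have e2 : z^* * c^* = - (p + 1).
  rewrite -rmorphM zc; apply: real_conj; rewrite rpredN rpredD // ?ger0_real //.
rewrite /e form_delta hjj !mulr0 addr0 e2 zc.
have -> : p + - (p + 1) + - (p + 1) = - (p + 2%:R) by rewrite -[2%:R]/(1 + 1); ring.
rewrite oppr_ge0 => h.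
have : 0 < p + 2%:R by rewrite ltr_wpDl.
by move=> /lt_le_trans /(_ h); rewrite ltxx.
Qed.
Definition sos n (B : 'M[C]_n) := exists s : seq (C * 'cV[C]_n),
  all (fun cw => 0 <= cw.1) s /\ B = \sum_(cw <- s) cw.1 *: (cw.2 *m adj cw.2).

Lemma rank1E n (w : 'cV[C]_n) i j : (w *m adj w) i j = w i 0 * (w j 0)^*.
Proof. by rewrite !mxE big_ord1 !mxE. Qed.

Lemma form_rank1 n (w x y : 'cV[C]_n) :
  form (w *m adj w) x y = (adj x *m w) 0 0 * (adj w *m y) 0 0.
Proof. by rewrite /form !mulmxA -(mulmxA (adj x *m w)) mxE big_ord1. Qed.

Lemma formBZ n (B1 B2 : 'M[C]_n) c x y :
  form (B1 - c *: B2) x y = form B1 x y - c * form B2 x y.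
Proof. by rewrite /form mulmxBr mulmxBl -scalemxAr -scalemxAl !mxE. Qed.

Lemma adj_delta n (k : 'I_n) : adj (delta_mx k 0) = delta_mx 0 k.
Proof.
apply/matrixP => i j; rewrite !mxE (ord1 i) eqxx /= andbT.
by case: (j == k); rewrite ?rmorph1 ?rmorph0.
Qed.

Lemma adj_col n (B : 'M[C]_n) k : psd B -> adj (col k B) = row k B.
Proof. by move=> hB; apply/matrixP => i j; rewrite !mxE -psd_herm. Qed.

Lemma sos0 n : sos (0 : 'M[C]_n).
Proof. by exists [::]; rewrite big_nil. Qed.

Lemma diag0_zero n (B : 'M[C]_n) : psd B -> (forall j, B j j = 0) -> B = 0.
Proof. by move=> hB h; apply/matrixP => i j; rewrite mxE; apply: psd_diag0. Qed.

Lemma psd_sos n (B : 'M[C]_n) : psd B -> sos B.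
Proof.
move=> hB.
suff key : forall N (B : 'M[C]_n), psd B -> (#|[set j | B j j != 0%R]| <= N)%N -> sos B.
  exact: key _ B hB (leqnn _).
move=> N {B hB}; elim: N => [|N IH] B hB hN;
  (have zero : [set j | B j j != 0%R] = finset.set0 -> sos B;
  [move=> E; have Bz : B = 0;
   [apply: (diag0_zero hB) => j; apply/eqP; apply: contraT => hj;
    by move/setP: E => /(_ j); rewrite !inE hj
   | by rewrite Bz; exact: sos0]|]).
  by apply: zero; apply/eqP; rewrite -cards_eq0 -leqn0.
case: (set_0Vmem [set j | B j j != 0%R]) => [/zero //|[k]].
rewrite inE => hk.
set d := B k k; set b := col k B.
set B' := B - d^-1 *: (b *m adj b).
have d0 : 0 <= d by apply: psd_diag_ge0.
have dr : d^* = d by apply: real_conj; apply: ger0_real.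
have hB' : psd B'.
  move=> v; rewrite -/(form B' v v) formBZ form_rank1.
  have -> : adj v *m b = (adj v *m B *m delta_mx k 0) by rewrite /b colE mulmxA.
  rewrite -/(form B v _) /b (adj_col _ hB) rowE -adj_delta -/(form B _ v).
  set t := - form B (delta_mx k 0) v / d.
  have : 0 <= form B (v + t *: delta_mx k 0) (v + t *: delta_mx k 0) := hB _.
  rewrite formDl !formDr !formZl !formZr form_delta -/d -mulrDr.
  have -> : form B (delta_mx k 0) v + t * d = 0 by rewrite /t mulrVK ?unitfE // addrN.
  rewrite mulr0 addr0 => h.
  move: h; rewrite /t.
  move: (form B (delta_mx k 0) v) (form B v (delta_mx k 0)) (form B v v) => g a p.
  move=> h; suff -> : p - d^-1 * (a * g) = p + (- g / d) * a by [].
  by ring.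
have eB' : forall i, B' i i = B i i - d^-1 * (B i k * (B i k)^*).
  by move=> i; rewrite /B' !mxE big_ord1 !mxE.
have sub : [set j | B' j j != 0] \subset [set j | B j j != 0] :\ k.
  apply/fintype.subsetP => j; rewrite !inE; apply: contraR; rewrite negb_and !negbK.
  case/orP => [/eqP -> | /eqP hj].
    rewrite eB' -/d dr mulrA mulVf // mul1r subrr //.
  rewrite eB' hj.
  have -> : B j k = 0 by rewrite psd_herm // psd_diag0 // rmorph0.
  by rewrite mul0r mulr0 subrr.
have hN' : (#|[set j | B' j j != 0%R]| <= N)%N.
  have := subset_leq_card sub.
  rewrite (cardsD1 k [set j | B j j != 0]) inE hk add1n in hN.
  by move=> h; apply: leq_trans h _.
have [s [hs eB2]] := IH B' hB' hN'.
exists ((d^-1, b) :: s); split; first by rewrite /= invr_ge0 d0.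
by rewrite big_cons /= -eB2 /B' addrC subrK.
Qed.
Lemma sos_tr_ge0 n (A D : 'M[C]_n) : sos A -> psd D -> 0 <= \tr (A *m D).
Proof.
move=> [s [hs ->]] hD; rewrite mulmx_suml raddf_sum /= big_seq.
apply: sumr_ge0 => cw cws; rewrite -scalemxAl mxtraceZ.
apply: mulr_ge0; first by move/allP: hs => /(_ cw cws).
by rewrite -mulmxA mxtrace_mulC trace_mx11; apply: hD.
Qed.
Lemma tens_sum (I J : Type) (r1 : seq I) (r2 : seq J) m p
  (F : I -> 'M[C]_m) (G : J -> 'M[C]_p) :
  tensmx (\sum_(a <- r1) F a) (\sum_(b <- r2) G b) =
  \sum_(a <- r1) \sum_(b <- r2) tensmx (F a) (G b).
Proof.
apply/matrixP => i j; rewrite !mxE !summxE mulr_suml; apply: eq_bigr => a _.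
rewrite summxE mulr_sumr; apply: eq_bigr => b _; by rewrite !mxE.
Qed.

Lemma tensZ m p (c c' : C) (M : 'M[C]_m) (N : 'M[C]_p) :
  tensmx (c *: M) (c' *: N) = (c * c') *: tensmx M N.
Proof. by apply/matrixP => i j; rewrite !mxE mulrACA. Qed.

Lemma adj_tens m p (w : 'cV[C]_m) (u : 'cV[C]_p) :
  tensmx (adj w) (adj u) = adj (tensmx w u).
Proof.
apply/matrixP => i j; rewrite !mxE rmorphM.
by case: (mxtens_unindex (0 : 'I_(1*1))) => a b; rewrite /= (ord1 a) (ord1 b).
Qed.

Lemma rank1_tens m p (w : 'cV[C]_m) (u : 'cV[C]_p) :
  tensmx (w *m adj w) (u *m adj u) = tensmx w u *m adj (tensmx w u).
Proof. by rewrite -tensmx_mul adj_tens. Qed.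

Lemma sos_tens m p (A : 'M[C]_m) (B : 'M[C]_p) : sos A -> sos B -> sos (tensmx A B).
Proof.
move=> [s1 [h1 ->]] [s2 [h2 ->]].
exists [seq (a.1 * b.1, tensmx a.2 b.2) | a <- s1, b <- s2]; split.
  apply/allP => cw /allpairsP [[a b] [ha hb ->]] /=.
  by apply: mulr_ge0; [move/allP: h1 => /(_ a ha) | move/allP: h2 => /(_ b hb)].
rewrite tens_sum big_allpairs_dep; apply: eq_bigr => a _; apply: eq_bigr => b _.
by rewrite tensZ rank1_tens.
Qed.

Lemma tr_tens m p (A : 'M[C]_m) (B : 'M[C]_p) : \tr (tensmx A B) = \tr A * \tr B.
Proof. by rewrite /mxtrace mulr_sum; apply: eq_bigr => i _; rewrite mxE. Qed.
Lemma sos_one : sos (1%:M : 'M[C]_1).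
Proof.
exists [:: (1, const_mx 1)]; split; first by rewrite /= ler01.
rewrite big_seq1 /= scale1r; apply/matrixP => i j.
by rewrite rank1E !mxE (ord1 i) (ord1 j) eqxx conjC1 mulr1.
Qed.

Lemma ktens_sos d l (f : 'I_l -> 'M[C]_d) : (forall i, sos (f i)) -> sos (ktens f).
Proof.
elim: l f => [|l IH] f hf /=; first exact: sos_one.
by apply: sos_tens; [apply: hf | apply: IH => i; apply: hf].
Qed.

Lemma ktens_tr d l (f : 'I_l -> 'M[C]_d) : (forall i, \tr (f i) = 1) -> \tr (ktens f) = 1.
Proof.
elim: l f => [|l IH] f hf /=; first by rewrite mxtrace1.
by rewrite tr_tens hf IH ?mul1r // => i; apply: hf.
Qed.

Lemma Atens_sos (S X : finType) d l (A : S -> X -> 'M[C]_d)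
  (hA : forall s, cq_channel (A s)) (s : {ffun 'I_l -> S}) (x : {ffun 'I_l -> X}) : sos (Atens A s x) /\ \tr (Atens A s x) = 1.
Proof.
split; first by apply: ktens_sos => i; apply: psd_sos; case: (hA (s i) (x i)).
by apply: ktens_tr => i; case: (hA (s i) (x i)).
Qed.

Lemma tr_bounds n (A : 'M[C]_n) M (D : 'I_M -> 'M[C]_n) i :
  sos A -> \tr A = 1 -> (forall j, psd (D j)) -> psd (1%:M - \sum_j D j) ->
  0 <= \tr (A *m D i) <= 1.
Proof.
move=> hA h1 hD hS; have g0 := fun j => sos_tr_ge0 hA (hD j).
apply/andP; split; first exact: g0.
have := sos_tr_ge0 hA hS.
rewrite mulmxBr mulmx1 mulmx_sumr.
have tN : forall Q : 'M[C]_n, \tr (- Q) = - \tr Q.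
    by move=> Q; rewrite -scaleN1r mxtraceZ mulN1r.
  have tS : \tr (\sum_j A *m D j) = \sum_j \tr (A *m D j).
    by elim/big_rec2 : _ => [|j x y _ <-]; rewrite ?mxtrace0 ?mxtraceD.
have -> : \tr (A - \sum_j A *m D j) = \tr A - \sum_j \tr (A *m D j).
  by rewrite mxtraceD tN tS.
rewrite h1 subr_ge0.
apply: le_trans; rewrite (bigD1 i) //= lerDl; apply: sumr_ge0 => j _; exact: g0.
Qed.
Lemma Re_bounds (z : C) : 0 <= z <= 1 -> 0 <= complex.Re z <= 1.
Proof. by rewrite !lecE => /andP [/andP [_ h1] /andP [_ h2]]; rewrite h1 h2. Qed.

Lemma success_bounds (S X : finType) d l M (A : S -> X -> 'M[C]_d)
  (hA : forall s, cq_channel (A s)) (s : {ffun 'I_l -> S}) (c : dcode R X d l M) :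
  is_code c -> 0 <= success A s c <= 1.
Proof.
move=> [hD hS].
have hz : forall i, 0 <= complex.Re (\tr (Atens A s (cword c i) *m cdec c i)) <= 1.
  move=> i; apply: Re_bounds; have [h1 h2] := Atens_sos hA s (cword c i).
  exact: tr_bounds.
rewrite /success; case: M c hD hS hz => [|M] c hD hS hz.
  by rewrite big_ord0 mulr0 lexx ler01.
apply/andP; split.
  by apply: mulr_ge0; [rewrite invr_ge0 ler0n | apply: sumr_ge0 => i _; case/andP: (hz i)].
rewrite ler_pdivrMl ?ltr0n // mulr1.
have -> : M.+1%:R = \sum_(i < M.+1) (1 : R) by rewrite sumr_const card_ord.
by apply: ler_sum => i _; case/andP: (hz i).
Qed.
End Mx.
Section Prob.
Variable R : realType.
Local Open Scope classical_set_scope.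

Lemma prob_inhabited d (T : measurableType d) (P : probability T R) : exists t : T, True.
Proof.
case: (pselect (exists t : T, True)) => // hn.
have e : [set: T] = set0 by apply/seteqP; split => t // _; apply: hn; exists t.
have := probability_setT P; rewrite e measure0 => -[] /eqP; by rewrite eq_sym oner_eq0.
Qed.

Lemma step d (T : measurableType d) (P : probability T R) (I : finType)
  (u : I -> T -> R) (hm : forall i, measurable_fun setT (u i))
  (h01 : forall i t, 0 <= u i t <= 1) (eps : R)
  (hint : forall i, ((1 - eps)%:E <= \int[P]_t (u i t)%:E)%E)
  (w : I -> R) (hw : forall i, 0 <= w i) (del : R) (hdel : 0 < del) :
  exists t, \sum_i w i * (2 - u i t) <= (1 + eps + del) * \sum_i w i.
Proof.
have [t0 _] := prob_inhabited P.
have W0 : 0 <= \sum_i w i by apply: sumr_ge0.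
case: (eqVneq (\sum_i w i) 0) => [W0e|Wn0].
  exists t0; rewrite W0e mulr0 big1 // => i _.
  by move/eqP: W0e; rewrite psumr_eq0 // => /allP /(_ i) /(_ (mem_index_enum _)) /eqP ->; rewrite mul0r.
have Wpos : 0 < \sum_i w i by rewrite lt_def Wn0 W0.
apply: contrapT => hn.
have hlt : forall t, \sum_i w i * u i t <= (1 - eps - del) * \sum_i w i.
  move=> t; have := hn; move/forallNP/(_ t)/negP; rewrite -ltNge => h.
  have -> : \sum_i w i * u i t = 2 * \sum_i w i - \sum_i w i * (2 - u i t).
    rewrite mulr_sumr -sumrB; apply: eq_bigr => i _; ring.
  apply: ltW; move: h; lra.
have mu : forall i, measurable_fun setT (fun t => (w i * u i t)%:E).
  move=> i; apply/measurable_EFinP; apply: measurable_funM => //; exact: measurable_cst.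
have int1 : (((1 - eps) * \sum_i w i)%:E <= \int[P]_t (\sum_i w i * u i t)%:E)%E.
  have -> : (fun t => (\sum_i w i * u i t)%:E) = (fun t => \sum_i (w i * u i t)%:E).
    by apply/funext => t; rewrite sumEFin.
  rewrite ge0_integral_sum //; last first.
    by move=> i t _; rewrite lee_fin mulr_ge0 //; case/andP: (h01 i t).
  rewrite mulr_sumr -sumEFin; apply: lee_sum => i _.
  have -> : (fun t => (w i * u i t)%:E) = (fun t => (w i)%:E * (u i t)%:E)%E.
    by apply/funext => t; rewrite EFinM.
  rewrite ge0_integralZl_EFin //.
  - by rewrite mulrC EFinM; apply: lee_wpmul2l; rewrite ?lee_fin.
  - by move=> t _; rewrite lee_fin; case/andP: (h01 i t).
  - by apply/measurable_EFinP.
have int2 : (\int[P]_t (\sum_i w i * u i t)%:E <= ((1 - eps - del) * \sum_i w i)%:E)%E.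
  have f10 : forall t, [set: T] t -> (0 <= (\sum_i w i * u i t)%:E)%E.
    by move=> t _; rewrite lee_fin; apply: sumr_ge0 => i _; rewrite mulr_ge0 //; case/andP: (h01 i t).
  have mf1 : measurable_fun [set: T] (fun t => (\sum_i w i * u i t)%:E).
    apply/measurable_EFinP; apply: measurable_sum => i; apply: measurable_funM => //; exact: measurable_cst.
  have mf2 : measurable_fun [set: T] (cst ((1 - eps - del) * \sum_i w i)%:E).
    exact: measurable_cst.
  have H := @ge0_le_integral _ T R P setT measurableT _ _ f10 mf1 mf2.
  have P1 : (P : {measure set T -> \bar R}) [set: T] = 1%E := probability_setT P.
  rewrite integral_cst // P1 mule1 in H; apply: H.
  by move=> t _; rewrite lee_fin.
have := le_trans int1 int2; rewrite lee_fin => h.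
have : 0 < del * \sum_i w i by apply: mulr_gt0.
move: h; lra.
Qed.
End Prob.
Section Reals.
Variable R : realType.

Lemma exp2_le (f : R) : 0 <= f -> f <= 1 -> expR (f * ln 2) <= 1 + f.
Proof.
move=> f0 f1.
have := @convex_expR R (Itv01 f0 f1) (ln 2) 0.
rewrite !convRE /= expR0 lnK ?posrE // mulr0 addr0 => h.
apply: le_trans h _; rewrite /unstable.onem mulr1; lra.
Qed.

Lemma ln2_ge : 1 / 2 <= ln (2 : R).
Proof.
have h : 1 / 2 <= expR (- (1 / 2) : R).
  have := expR_ge1Dx (- (1 / 2) : R); lra.
rewrite -ler_expR lnK ?posrE //.
rewrite expRN in h.
have e0 : 0 < expR (1 / 2 : R) by apply: expR_gt0.
rewrite -(ler_pM2r e0) mulVf ?gt_eqF // in h.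
by rewrite -(ler_pM2l (_ : 0 < 1 / 2)) ?mulr1 //; lra.
Qed.
Lemma choose_del (l K nS : nat) (a eps : R) : (0 < l)%N -> (0 < K)%N -> 0 < a ->
  0 <= eps -> 4 * eps <= a -> 2 * log2 (nS%:R : R) < K%:R * a / l%:R ->
  exists2 del : R, 0 < del & (nS ^ l)%:R * (1 + eps + del) ^+ K < expR (K%:R * a * ln 2).
Proof.
move=> l0 K0 a0 e0 ea h.
case: nS h => [|nS] h.
  by exists 1 => //; rewrite exp0n // mul0r expR_gt0.
have q0 : 1 / 2 <= ln (2 : R) := ln2_ge.
set q := ln (2 : R) in q0 *.
set x := ln (nS.+1%:R : R).
have Lpos : 0 < (l%:R : R) by rewrite ltr0n.
have Kpos : 0 < (K%:R : R) by rewrite ltr0n.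
have qpos : 0 < q by apply: lt_le_trans q0; lra.
have hh : 2 * x * l%:R < K%:R * a * q.
  move: h; rewrite /log2 -/q -/x.
  rewrite -(ltr_pM2r (mulr_gt0 qpos Lpos)).
  have -> : 2 * (x / q) * (q * l%:R) = 2 * x * l%:R by field; rewrite gt_eqF.
  have -> : K%:R * a / l%:R * (q * l%:R) = K%:R * a * q by field; rewrite gt_eqF.
  done.
set g := K%:R * a * q / 2 - l%:R * x.
have gpos : 0 < g by rewrite /g; lra.
exists (g / (2 * K%:R)); first by apply: divr_gt0 => //; lra.
have eN : (nS.+1 ^ l)%:R = expR (l%:R * x) :> R.
  by rewrite expRM_natl /x lnK ?posrE ?ltr0n // natrX.
rewrite eN.
apply: (@le_lt_trans _ _ (expR (l%:R * x) * expR (K%:R * (eps + g / (2 * K%:R))))).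
  apply: ler_wpM2l; first exact: expR_ge0.
  rewrite expRM_natl; apply: lerXn2r.
  - rewrite nnegrE; have : 0 < g / (2 * K%:R) by apply: divr_gt0 => //; lra.
    lra.
  - by rewrite nnegrE expR_ge0.
  - by have := expR_ge1Dx (eps + g / (2 * K%:R)); lra.
rewrite -expRD ltr_expR.
have -> : K%:R * (eps + g / (2 * K%:R)) = K%:R * eps + g / 2 by field; rewrite gt_eqF.
have : K%:R * eps <= K%:R * a * q / 2.
  have : K%:R * (4 * eps) <= K%:R * (2 * a * q).
    apply: ler_wpM2l; first lra.
    apply: le_trans ea _; nra.
  lra.
rewrite /g; lra.
Qed.
End Reals.

Unset Implicit Arguments.
Set Strict Implicit.
Set Printing Implicit Defensive.

Theorem lemma10 (R : realType) (S X : finType) (d : nat)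
  (A : S -> X -> 'M[R[i]]_d) (hA : forall s, cq_channel (A s))
  (l M : nat) (hl : (0 < l)%N)
  (dT : measure_display) (T : measurableType dT) (P : probability T R)
  (c : T -> dcode R X d l M) (hc : forall t, is_code (c t))
  (hcm : forall s : {ffun 'I_l -> S},
           measurable_fun setT (fun t => success A s (c t)))
  (eps : R) (heps0 : 0 <= eps) (heps1 : eps < 1)
  (hsucc : forall s : {ffun 'I_l -> S},
     ((1 - eps)%:E <= \int[P]_t (success A s (c t))%:E)%E)
  (n m : R) (K : nat) (hK : K%:R = l%:R `^ n)
  (h1 : 4 * eps <= l%:R `^ (- m))
  (h2 : 2 * log2 (#|S|%:R : R) < l%:R `^ (n - m - 1)) :
  exists C : 'I_K -> dcode R X d l M,
    (forall j, is_code (C j)) /\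
    (forall s : {ffun 'I_l -> S},
       1 - l%:R `^ (- m) <= (K%:R)^-1 * \sum_(j < K) success A s (C j)).
Proof.
pose u := fun (s : {ffun 'I_l -> S}) t => success A s (c t).
have h01 : forall s t, 0 <= u s t <= 1 := fun s t => success_bounds hA s (hc t).
have lpos : 0 < (l%:R : R) by rewrite ltr0n.
have Kpos : (0 < K)%N by rewrite -(ltr0n R) hK powR_gt0.
set a := l%:R `^ (- m) in h1 *.
have a0 : 0 < a by rewrite /a powR_gt0.
have h2' : 2 * log2 (#|S|%:R : R) < K%:R * a / l%:R.
  have l0 : (l%:R : R) != 0 by rewrite pnatr_eq0 -lt0n.
  rewrite hK /a -powRD; last by rewrite l0 implybT.
  rewrite -[l%:R in X in _ < _ / X]powRr1 ?ler0n // -powRB; last by rewrite l0 implybT.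
  exact: h2.
have [del del0 hdel] := choose_del hl Kpos a0 heps0 h1 h2'.
set N := #|{ffun 'I_l -> S}|%:R : R.
have eN : N = (#|S| ^ l)%:R by rewrite /N card_ffun card_ord.
set rho := 1 + eps + del.
have [t0 _] := prob_inhabited P.
have claim : forall j, exists g : nat -> T,
    \sum_s \prod_(i < j) (2 - u s (g i)) <= rho ^+ j * N.
  elim => [|j [g hg]].
    exists (fun _ => t0); rewrite expr0 mul1r.
    under eq_bigr do rewrite big_ord0.
    by rewrite sumr_const.
  have hw : forall s, 0 <= \prod_(i < j) (2 - u s (g i)).
    move=> s; apply: prodr_ge0 => i _; case/andP: (h01 s (g i)) => _; lra.
  have [t ht] := step (u := u) (fun s => hcm s) h01 hsucc hw del0.
  exists (fun i : nat => if i == j then t else g i).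
  have -> : \sum_s \prod_(i < j.+1) (2 - u s (if (i : nat) == j then t else g i)) =
            \sum_s (\prod_(i < j) (2 - u s (g i))) * (2 - u s t).
    apply: eq_bigr => s _; rewrite big_ord_recr /= eqxx; congr (_ * _).
    by apply: eq_bigr => i _; rewrite ltn_eqF.
  apply: le_trans ht _; rewrite exprS -mulrA; apply: ler_wpM2l => //.
  by rewrite /rho; lra.
have [g hg] := claim K.
exists (fun k => c (g k)); split => // s.
rewrite leNgt; apply/negP => lt.
have Kr : 0 < (K%:R : R) by rewrite ltr0n.
have lt2 : K%:R * a < \sum_(k < K) (1 - u s (g k)).
  rewrite sumrB sumr_const card_ord -/(K%:R).
  have : \sum_(k < K) u s (g k) < K%:R * (1 - a).
    by move: lt; rewrite -(ltr_pM2l Kr) mulrA mulfV ?gt_eqF // mul1r.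
  lra.
have q0 : 0 <= ln (2 : R) by apply: ln_ge0; rewrite ler1n.
have e1 : expR (K%:R * a * ln 2) <= \prod_(k < K) (2 - u s (g k)).
  apply: (@le_trans _ _ (expR ((\sum_(k < K) (1 - u s (g k))) * ln 2))).
    by rewrite ler_expR ler_wpM2r // ltW.
  rewrite mulr_suml expR_sum; apply: ler_prod => k _.
  case/andP: (h01 s (g k)) => hu0 hu1.
  rewrite expR_ge0 /=.
  have := exp2_le (f := 1 - u s (g k)); rewrite subr_ge0 hu1 => /(_ isT).
  have H : 1 - u s (g k) <= 1 by lra.
  move/(_ H); have -> : 1 + (1 - u s (g k)) = 2 - u s (g k) by ring.
  done.
have e2 : \prod_(k < K) (2 - u s (g k)) <= rho ^+ K * N.
  apply: le_trans hg; rewrite (bigD1 s) //= lerDl; apply: sumr_ge0 => s' _.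
  by apply: prodr_ge0 => i _; case/andP: (h01 s' (g i)) => _; lra.
have := le_trans e1 e2; rewrite eN [rho ^+ K * _]mulrC => h.
by move: (lt_le_trans hdel h); rewrite ltxx.
Qed.
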